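(* Let $G$ be a graph with no induced $P_7$, $C_4$, $C_6$ or $C_7$, and let $H=(B_1,\dots,B_5)$ be a nice blowup of $C_5$ in $G$. For every $v\in V(G)\setminus V(H)$, the set $\operatorname{supp}(v)$ consists of consecutive integers modulo $5$ and has size in $\{0,1,2,3,5\}$.
   Context: Indices modulo $5$. A nice blowup of $C_5$ is a tuple $(B_1,\dots,B_5)$ of pairwise disjoint cliques such that every vertex of $B_i$ has a neighbor in $B_{i-1}$ and in $B_{i+1}$, $B_i$ is anticomplete to $B_{i+2}$, and there are no $a\in B_i$, distinct $b,c\in B_{i+1}$, $d\in B_{i+2}$ with $G[\{a,b,c,d\}]\cong P_4$. $V(H)=B_1\cup\dots\cup B_5$. For $v\notin V(H)$, $\operatorname{supp}(v)=\{i\in\{1,\dots,5\}: v \text{ has a neighbor in } B_i\}$. *)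

(* Defs.v *)
From mathcomp Require Import all_boot.
Set Implicit Arguments. Unset Strict Implicit. Unset Printing Implicit Defensive.

Definition simple_graph (T : finType) (e : rel T) : Prop :=
  symmetric e /\ irreflexive e.

Definition path_adj (n : nat) (i j : 'I_n) : bool :=
  ((i : nat).+1 == j) || ((j : nat).+1 == i).

Definition cycle_adj (n : nat) (i j : 'I_n) : bool :=
  (((i : nat).+1 %% n) == j) || (((j : nat).+1 %% n) == i).

Definition has_induced (T : finType) (e : rel T) (n : nat) (F : rel 'I_n) : Prop :=
  exists f : 'I_n -> T, injective f /\ forall i j, e (f i) (f j) = F i j.

Definition induces_P4 (T : finType) (e : rel T) (S : {set T}) : Prop :=
  exists f : 'I_4 -> T, injective f /\ [set f i | i : 'I_4] = S /\
    forall i j, e (f i) (f j) = path_adj i j.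

Definition is_clique (T : finType) (e : rel T) (A : {set T}) : Prop :=
  forall x y, x \in A -> y \in A -> x != y -> e x y.

(* Indices modulo 5 are 'I_5; i+1 = ordS i, i-1 = ord_pred i. *)
Definition nice_blowup_C5 (T : finType) (e : rel T) (B : 'I_5 -> {set T}) : Prop :=
  (forall i j, i != j -> [disjoint B i & B j]) /\
  (forall i, is_clique e (B i)) /\
  (forall i x, x \in B i ->
      (exists2 y, y \in B (ord_pred i) & e x y) /\
      (exists2 y, y \in B (ordS i) & e x y)) /\
  (forall i x y, x \in B i -> y \in B (ordS (ordS i)) -> ~~ e x y) /\
  (forall i a b c d, a \in B i -> b \in B (ordS i) -> c \in B (ordS i) ->
      b != c -> d \in B (ordS (ordS i)) -> ~ induces_P4 e [set a; b; c; d]).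

Definition blowup_vertices (T : finType) (B : 'I_5 -> {set T}) : {set T} :=
  \bigcup_(i < 5) B i.

Definition supp (T : finType) (e : rel T) (B : 'I_5 -> {set T}) (v : T) : {set 'I_5} :=
  [set i : 'I_5 | [exists u in B i, e v u]].

(* S is a set of consecutive integers modulo 5: S = {a, a+1, ..., a+k-1} mod 5 *)
Definition consecutive_mod5 (S : {set 'I_5}) : Prop :=
  exists (a : 'I_5) (k : nat), k <= 5 /\
    S = [set i : 'I_5 | (((i : nat) + 5 - a) %% 5 < k)].

(* Main.v *)
Require Import Defs.
From mathcomp Require Import all_boot.

Ltac cmp_rhs := match goal with |- ?l = ?r => let r' := eval compute in r in change (l = r') end.

Lemma C4_of (T : finType) (e : rel T) (x0 x1 x2 x3 : T) :
  simple_graph e -> uniq [:: x0; x1; x2; x3] ->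
  e x0 x1 -> e x1 x2 -> e x2 x3 -> e x3 x0 -> ~~ e x0 x2 -> ~~ e x1 x3 ->
  has_induced e (@cycle_adj 4).
Proof.
move=> [sym irr] U e01 e12 e23 e30 n02 n13.
exists (fun i : 'I_4 => nth x0 [:: x0; x1; x2; x3] i); split.
  move=> i j /eqP; rewrite nth_uniq //; first by move/eqP/val_inj.
move=> [[|[|[|[|?]]]] Hi] [[|[|[|[|?]]]] Hj] //=; cmp_rhs;
  first [ done | by rewrite irr | by apply: negbTE | by rewrite sym | by rewrite sym; apply/negbTE ].
Qed.

Lemma P4_of (T : finType) (e : rel T) (x0 x1 x2 x3 : T) :
  simple_graph e -> uniq [:: x0; x1; x2; x3] ->
  e x0 x1 -> e x1 x2 -> e x2 x3 -> ~~ e x0 x2 -> ~~ e x1 x3 -> ~~ e x0 x3 ->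
  induces_P4 e [set x0; x1; x2; x3].
Proof.
move=> [sym irr] U e01 e12 e23 n02 n13 n03.
exists (fun i : 'I_4 => nth x0 [:: x0; x1; x2; x3] i); split; [|split].
- move=> i j /eqP; rewrite nth_uniq //; first by move/eqP/val_inj.
- apply/setP=> x; rewrite !inE; apply/imsetP/idP.
    by move=> [[[|[|[|[|?]]]] Hi] _ ->] //=; rewrite eqxx ?orbT.
  rewrite -!orbA; move=> /or4P [] /eqP ->.
  + by exists (@Ordinal 4 0 erefl).
  + by exists (@Ordinal 4 1 erefl).
  + by exists (@Ordinal 4 2 erefl).
  + by exists (@Ordinal 4 3 erefl).
- move=> [[|[|[|[|?]]]] Hi] [[|[|[|[|?]]]] Hj] //=; cmp_rhs;
  first [ done | by rewrite irr | by apply: negbTE | by rewrite sym | by rewrite sym; apply/negbTE ].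
Qed.

Lemma ordS_neq (i : 'I_5) : (ordS i != i) && (ordS (ordS i) != i) && (ordS (ordS i) != ordS i).
Proof. by case: i => [[|[|[|[|[|?]]]]] Hi]. Qed.

Lemma key (T : finType) (e : rel T) (B : 'I_5 -> {set T}) (i : 'I_5) (v a c : T) :
  simple_graph e -> ~ has_induced e (@cycle_adj 4) -> nice_blowup_C5 e B ->
  v \notin blowup_vertices B -> a \in B i -> c \in B (ordS (ordS i)) ->
  e v a -> e v c -> (forall b, b \in B (ordS i) -> ~~ e v b) -> False.
Proof.
move=> G noC4 [dis [cl [nb [anti p4]]]] vn aB cB eva evc nob.
have [_ [b bB eab]] := nb i a aB.
have [[b' b'B ecb'] _] := nb _ c cB; rewrite ordSK in b'B.
have dif : forall j k x y, j != k -> x \in B j -> y \in B k -> x != y.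
  move=> j k x y jk xj yk; apply/eqP => exy; subst.
  by rewrite (disjointFr (dis _ _ jk) xj) in yk.
have vnot : forall j x, x \in B j -> v != x.
  by move=> j x xj; apply/eqP=> ex; subst; apply: (negP vn); apply/bigcupP; exists j.
have /andP[/andP[n10 n20] n21] := ordS_neq i.
have n01 : i != ordS i by rewrite eq_sym.
have n02 : i != ordS (ordS i) by rewrite eq_sym.
have n12 : ordS i != ordS (ordS i) by rewrite eq_sym.
have G' := G; case: G' => [sym irr].
have nac : ~~ e a c := anti i a c aB cB.
have va := vnot _ _ aB. have vb := vnot _ _ bB. have vb' := vnot _ _ b'B. have vc := vnot _ _ cB.
have ab := dif _ _ _ _ n01 aB bB. have ab' := dif _ _ _ _ n01 aB b'B.
have ac := dif _ _ _ _ n02 aB cB. have bc := dif _ _ _ _ n12 bB cB.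
have b'c := dif _ _ _ _ n12 b'B cB.
case eab' : (e a b').
  apply: noC4; apply: (@C4_of _ e v a b' c) => //.
  - by rewrite /= !inE !negb_or va vb' vc ab' ac b'c.
  - by rewrite sym.
  - by rewrite sym.
  - exact: nob.
case ecb : (e c b).
  apply: noC4; apply: (@C4_of _ e v a b c) => //.
  - by rewrite /= !inE !negb_or va vb vc ab ac bc.
  - by rewrite sym.
  - by rewrite sym.
  - exact: nob.
have bb' : b != b' by apply/eqP => bb; subst; rewrite eab in eab'.
apply: (p4 i a b b' c aB bB b'B bb' cB).
apply: P4_of => //.
- by rewrite /= !inE !negb_or ab ab' ac bb' bc b'c.
- exact: (cl (ordS i) b b' bB b'B bb').
- by rewrite sym.
- by rewrite eab'.
- by rewrite sym ecb.
Qed.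

Definition o5 (k : nat) (H : k < 5) : 'I_5 := Ordinal H.

Lemma sum5 (F : 'I_5 -> nat) : \sum_(i < 5) F i =
  F (@Ordinal 5 0 erefl) + F (@Ordinal 5 1 erefl) + F (@Ordinal 5 2 erefl)
  + F (@Ordinal 5 3 erefl) + F (@Ordinal 5 4 erefl).
Proof.
have L : forall i j : 'I_5, val i = val j -> F i = F j by move=> i j /val_inj ->.
rewrite !big_ord_recl big_ord0 addn0 !addnA.
by congr (_ + _ + _ + _ + _); apply: L.
Qed.

Lemma ord5_ind (P : 'I_5 -> Prop) : P (@Ordinal 5 0 erefl) -> P (@Ordinal 5 1 erefl) ->
  P (@Ordinal 5 2 erefl) -> P (@Ordinal 5 3 erefl) -> P (@Ordinal 5 4 erefl) -> forall i, P i.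
Proof.
move=> p0 p1 p2 p3 p4 [[|[|[|[|[|?]]]]] Hi] //.
- by rewrite (_ : Ordinal Hi = Ordinal (erefl : 0 < 5)) //; apply: val_inj.
- by rewrite (_ : Ordinal Hi = Ordinal (erefl : 1 < 5)) //; apply: val_inj.
- by rewrite (_ : Ordinal Hi = Ordinal (erefl : 2 < 5)) //; apply: val_inj.
- by rewrite (_ : Ordinal Hi = Ordinal (erefl : 3 < 5)) //; apply: val_inj.
- by rewrite (_ : Ordinal Hi = Ordinal (erefl : 4 < 5)) //; apply: val_inj.
Qed.

Lemma comb (S : {set 'I_5}) :
  (forall i, i \in S -> ordS (ordS i) \in S -> ordS i \in S) ->
  consecutive_mod5 S /\ #|S| \in [:: 0; 1; 2; 3; 5].
Proof.
move=> H.
set o0 := @Ordinal 5 0 erefl. set o1 := @Ordinal 5 1 erefl. set o2 := @Ordinal 5 2 erefl.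
set o3 := @Ordinal 5 3 erefl. set o4 := @Ordinal 5 4 erefl.
have s0 : ordS o0 = o1 by apply: val_inj.
have s1 : ordS o1 = o2 by apply: val_inj.
have s2 : ordS o2 = o3 by apply: val_inj.
have s3 : ordS o3 = o4 by apply: val_inj.
have s4 : ordS o4 = o0 by apply: val_inj.
have H0 := H o0. have H1 := H o1. have H2 := H o2. have H3 := H o3. have H4 := H o4.
rewrite ?s0 ?s1 ?s2 ?s3 ?s4 ?s0 in H0 H1 H2 H3 H4.
have -> : #|S| = \sum_(i < 5) (i \in S : nat).
  by rewrite -sum1_card big_mkcond /=; apply: eq_bigr => i _; case: (i \in S).
rewrite sum5 -/o0 -/o1 -/o2 -/o3 -/o4.
have Hc : forall (a : 'I_5) k, k <= 5 -> (forall i : 'I_5, (i \in S) = (((i : nat) + 5 - a) %% 5 < k)) ->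
  consecutive_mod5 S.
  by move=> a k hk hi; exists a, k; split => //; apply/setP => i; rewrite inE hi.
case E0: (o0 \in S); case E1: (o1 \in S); case E2: (o2 \in S); case E3: (o3 \in S);
  case E4: (o4 \in S); rewrite ?E0 ?E1 ?E2 ?E3 ?E4 in H0 H1 H2 H3 H4;
  try (exfalso; first [ by move: (H0 isT isT) | by move: (H1 isT isT) | by move: (H2 isT isT)
        | by move: (H3 isT isT) | by move: (H4 isT isT) ]);
  (split; [ | done]);
  solve [ (apply: (Hc o0) + apply: (Hc o1) + apply: (Hc o2) + apply: (Hc o3) + apply: (Hc o4));
    [ (instantiate (1 := 0) + instantiate (1 := 1) + instantiate (1 := 2) + instantiate (1 := 3)
       + instantiate (1 := 5)); done
    | apply: ord5_ind; rewrite ?E0 ?E1 ?E2 ?E3 ?E4; done ] ].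
Qed.

Theorem lemma4p2 (T : finType) (e : rel T) (B : 'I_5 -> {set T}) :
  simple_graph e ->
  ~ has_induced e (@path_adj 7) ->
  ~ has_induced e (@cycle_adj 4) ->
  ~ has_induced e (@cycle_adj 6) ->
  ~ has_induced e (@cycle_adj 7) ->
  nice_blowup_C5 e B ->
  forall v : T, v \notin blowup_vertices B ->
    consecutive_mod5 (supp e B v) /\ #|supp e B v| \in [:: 0; 1; 2; 3; 5].
Proof.
move=> G _ noC4 _ _ nice v vn.
apply: comb => i.
rewrite !inE => /existsP [a /andP [aB eva]] /existsP [c /andP [cB evc]].
case: (boolP [exists u in B (ordS i), e v u]) => // nS; exfalso.
apply: (@key T e B i v a c G noC4 nice vn aB cB eva evc) => b bB.
apply/negP => evb; move/negP: nS; apply; apply/existsP; exists b; by rewrite bB.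
Qed.
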